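(* Let $p\in(0,1)$, $m\ge1$, and let $\tilde G^p_m$ be as defined in the context. For every integer $k\ge0$ such that the event has positive probability, conditional on $s(\tilde G^p_m)=k$, the graph $\tilde G^p_m$ is uniformly distributed on the set of connected graphs on $[m]$ with $m+k-1$ edges; in particular this conditional law does not depend on $p$.
   Context: Ordered depth-first search ${\bf oDFS}(G)$ for a connected graph $G$ on $[m]$: set $\mathcal O_0=(1)$, $\mathcal A_0=\emptyset$; for $i=0,\dots,m-1$ let $v_i$ be the first element of $\mathcal O_i$, $\mathcal N_i$ the neighbours of $v_i$ outside $\mathcal A_i\cup\mathcal O_i$, $\mathcal A_{i+1}=\mathcal A_i\cup\{v_i\}$, and $\mathcal O_{i+1}$ obtained by deleting $v_i$ from the front of $\mathcal O_i$ and placing $\mathcal N_i$ in increasing order at the front. Depth-first walk $X(i)=|\mathcal O_i|-1$; area of a tree $T$: $a(T)=\sum_{i=1}^{m-1}X(i)$; an edge $uv\notin E(T)$ is permitted by ${\bf oDFS}(T)$ if $u,v\in\mathcal O_i$ for some $i$. $\tilde T^p_m$ is a random tree on $[m]$ with $\mathbb P(\tilde T^p_m=T)\propto(1-p)^{-a(T)}$; $\tilde G^p_m$ is obtained from $\tilde T^p_m$ by adding each permitted edge independently with probability $p$. The surplus of a connected graph $G$ on $[m]$ is $s(G)=|E(G)|-(m-1)$. *)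

(* Defs.v *)
(* Vertices [m] = {1..m} are represented by 'I_m = {0..m-1}
   (order-preserving relabelling i |-> i-1, so vertex 1 is ord 0).
   A graph on [m] is an edge set E : {set 'I_m * 'I_m} whose pairs (u,v)
   all satisfy u < v (each unordered edge {u,v} stored once). *)
From HB Require Import structures.
From mathcomp Require Import all_boot all_order all_algebra.
Set Implicit Arguments. Unset Strict Implicit. Unset Printing Implicit Defensive.
Import Order.TTheory GRing.Theory Num.Theory.

Section Graphs.
Variable m : nat.
Notation V := ('I_m).
Notation graph := {set V * V}.

Definition simple_graph (E : graph) : bool := [forall e in E, (e.1 < e.2)%N].

Definition adj (E : graph) : rel V := fun u v => ((u, v) \in E) || ((v, u) \in E).

Definition connected_graph (E : graph) : bool :=
  simple_graph E && [forall u : V, forall v : V, connect (adj E) u v].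

Definition is_tree (E : graph) : bool := connected_graph E && (#|E| == m.-1).

(* oDFS state (O_i, A_i); O_i as a sequence whose first element is at the front *)
Definition odfs_step (E : graph) (st : seq V * {set V}) : seq V * {set V} :=
  let: (Os, A) := st in
  match Os with
  | [::] => ([::], A)
  | v :: Ot =>
      let N := [seq w <- enum V | adj E v w && (w \notin A) && (w \notin Os)] in
      (N ++ Ot, v |: A)
  end.

(* O_0 = (1): the first element of 'I_m, i.e. vertex 1 *)
Definition odfs_init : seq V * {set V} := (take 1 (enum V), set0).

Definition odfs_state (E : graph) (i : nat) : seq V * {set V} :=
  iter i (odfs_step E) odfs_init.

Definition odfs_O (E : graph) (i : nat) : seq V := (odfs_state E i).1.

Definition dfwalk (E : graph) (i : nat) : nat := (size (odfs_O E i)).-1.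

Definition area (T : graph) : nat := \sum_(1 <= i < m) dfwalk T i.

Definition permitted (T : graph) : graph :=
  [set e : V * V | [&& (e.1 < e.2)%N, e \notin T &
     [exists i : 'I_m.+1, (e.1 \in odfs_O T i) && (e.2 \in odfs_O T i)]]].

Variable R : realFieldType.
Local Open Scope ring_scope.

Definition tree_weight (p : R) (T : graph) : R := (1 - p) ^- area T.
Definition tree_Z (p : R) : R := \sum_(T : graph | is_tree T) tree_weight p T.
Definition tree_law (p : R) (T : graph) : R := tree_weight p T / tree_Z p.

(* law of G~^p_m: T~ plus each permitted edge independently with prob. p *)
Definition graph_law (p : R) (G : graph) : R :=
  \sum_(T : graph | is_tree T)
     (if (T \subset G) && (G :\: T \subset permitted T) then
        tree_law p T * p ^+ #|G :\: T| *
          (1 - p) ^+ (#|permitted T| - #|G :\: T|)%N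
      else 0).

Definition surplus_is (G : graph) (k : nat) : bool := #|G| == (k + m.-1)%N.

Definition prob_surplus (p : R) (k : nat) : R :=
  \sum_(G : graph | surplus_is G k) graph_law p G.

Definition cond_law (p : R) (k : nat) (G : graph) : R :=
  (if surplus_is G k then graph_law p G else 0) / prob_surplus p k.

Definition n_conn (k : nat) : nat :=
  #|[set G : graph | connected_graph G && (#|G| == (m + k).-1)]|.

End Graphs.

(* Main.v *)
Require Import Defs.
From HB Require Import structures.
From mathcomp Require Import all_boot all_order all_algebra.
From Stdlib Require Import FunctionalExtensionality.
Set Implicit Arguments. Unset Strict Implicit. Unset Printing Implicit Defensive.
Import Order.TTheory GRing.Theory Num.Theory.

Section Run.
Variable n : nat.
Local Notation m := n.+1.
Local Notation V := 'I_m.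
Implicit Types (E T G : {set V * V}).

Definition AA E i := (odfs_state E i).2.
Definition seen E i x := (x \in AA E i) || (x \in odfs_O E i).

Lemma state0 E : odfs_state E 0 = ([:: ord0], set0).
Proof. rewrite /odfs_state /= /odfs_init. rewrite enum_ordSl. congr pair; by rewrite /= take0. Qed.

Lemma O0 E : odfs_O E 0 = [:: ord0].
Proof. by rewrite /odfs_O state0. Qed.
Lemma A0 E : AA E 0 = set0.
Proof. by rewrite /AA state0. Qed.

Lemma step_cons E i v t : odfs_O E i = v :: t ->
  odfs_O E i.+1 = [seq w <- enum V | adj E v w && (w \notin AA E i) && (w \notin v :: t)] ++ t
  /\ AA E i.+1 = v |: AA E i.
Proof.
rewrite /odfs_O /AA /odfs_state iterS; case: (iter _ _ _) => Os A /= -> //.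
Qed.

Lemma step_nil E i : odfs_O E i = [::] -> odfs_state E i.+1 = odfs_state E i.
Proof.
rewrite /odfs_O /odfs_state iterS; case: (iter _ _ _) => Os A /= -> //.
Qed.

Lemma step_nil' E i : odfs_O E i = [::] -> odfs_O E i.+1 = odfs_O E i /\ AA E i.+1 = AA E i.
Proof. by move=> h; rewrite /odfs_O /AA step_nil. Qed.

Lemma inv E i : uniq (odfs_O E i) /\ (forall x, x \in odfs_O E i -> x \notin AA E i).
Proof.
elim: i => [|i [IHu IHd]]. rewrite O0 A0. split. by []. move=> x. by rewrite in_set0.
case Ho: (odfs_O E i) => [|v t].
  by have [-> ->] := step_nil' Ho; rewrite Ho.
have [-> ->] := step_cons Ho.
rewrite Ho /= in IHu IHd; case/andP: IHu => vt ut.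
split.
  rewrite cat_uniq ut filter_uniq ?enum_uniq // andbT.
  apply/hasPn => x xt; rewrite mem_filter !inE xt /= orbT !andbF //.
move=> x; rewrite mem_cat mem_filter => /orP [/andP [/andP [/andP [_ nA] nO] _]|xt]; rewrite !inE negb_or.
  by move: nO; rewrite inE negb_or => /andP [-> _].
rewrite IHd ?inE ?xt ?orbT // andbT; apply/eqP => exv; by rewrite -exv xt in vt.
Qed.

Lemma seenS E i x : seen E i x -> seen E i.+1 x.
Proof.
rewrite /seen; case Ho: (odfs_O E i) => [|v t].
  by have [-> ->] := step_nil' Ho; rewrite Ho.
have [-> ->] := step_cons Ho.
rewrite !inE mem_cat => /orP [->|/orP [->|xt]]; rewrite ?orbT //.
by rewrite xt !orbT.
Qed.

Lemma AS E i x : x \in AA E i -> x \in AA E i.+1.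
Proof.
case Ho: (odfs_O E i) => [|v t].
  by have [_ ->] := step_nil' Ho.
by have [_ ->] := step_cons Ho; rewrite inE => ->; rewrite orbT.
Qed.

Lemma seen_le E i j x : i <= j -> seen E i x -> seen E j x.
Proof.
move/subnK => <-; elim: (j - i) => [//|d IH] /IH; rewrite addSn; exact: seenS.
Qed.

Lemma A_le E i j x : i <= j -> x \in AA E i -> x \in AA E j.
Proof.
move/subnK => <-; elim: (j - i) => [//|d IH] /IH; rewrite addSn; exact: AS.
Qed.

Lemma hd_A E i v t : odfs_O E i = v :: t -> v \in AA E i.+1.
Proof. by move/step_cons => [_ ->]; rewrite setU11. Qed.

Lemma F2 E i j v t : odfs_O E i = v :: t -> v \in odfs_O E j -> j <= i.
Proof.
move=> Ho vj; rewrite leqNgt; apply/negP => lt.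
have := A_le lt (hd_A Ho); have [_ d] := inv E j; by rewrite (negbTE (d _ vj)).
Qed.

Lemma F1 E i j x : x \in odfs_O E j -> j <= i -> seen E i x.
Proof. move=> xj le; apply: (seen_le le); by rewrite /seen xj orbT. Qed.

Lemma A_struct E i x : x \in AA E i -> exists j, j < i /\ exists t, odfs_O E j = x :: t.
Proof.
elim: i => [|i IH]; first by rewrite A0 inE.
case Ho: (odfs_O E i) => [|v t].
  rewrite /AA step_nil // => /IH [j [lt ?]]; exists j; split=> //; exact: ltnW.
have [_ ->] := step_cons Ho; rewrite !inE => /orP [/eqP ->|/IH [j [lt ?]]].
  by exists i; split=> //; exists t.
exists j; split => //; exact: ltnW.
Qed.

Lemma explored_once E i j x t t' : odfs_O E i = x :: t -> odfs_O E j = x :: t' -> i = j.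
Proof.
move=> Hi Hj; apply/anti_leq; rewrite (F2 Hj) ?(F2 Hi) // ?Hi ?Hj mem_head //.
Qed.

Lemma root_seen E i : seen E i ord0.
Proof. apply: (seen_le (leq0n i)); by rewrite /seen O0 mem_head orbT. Qed.


Lemma closedA E i x y : x \in AA E i -> adj E x y -> seen E i y.
Proof.
elim: i x y => [|i IH] x y; first by rewrite A0 inE.
case Ho: (odfs_O E i) => [|v t].
  rewrite /seen; have [-> ->] := step_nil' Ho; move=> /IH h /h; by rewrite /seen.
have [Oe Ae] := step_cons Ho; rewrite /seen Oe Ae !inE.
case/orP => [/eqP ->|xA] vy.
  case yA: (y \in AA E i); first by rewrite orbT.
  case yO: (y \in v :: t).
    move: yO; rewrite inE => /orP [->//|yt]; by rewrite mem_cat yt !orbT.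
  by rewrite mem_cat mem_filter vy yA yO mem_enum /= orbT.
have := seenS (IH _ _ xA vy); by rewrite /seen Oe Ae !inE.
Qed.

Lemma count_run E i : odfs_O E i = [::] \/ #|AA E i| = i.
Proof.
elim: i => [|i [IH|IH]]; first by right; rewrite A0 cards0.
  by left; have [-> _] := step_nil' IH.
case Ho: (odfs_O E i) => [|v t]; first by left; have [-> _] := step_nil' Ho.
right; have [_ ->] := step_cons Ho; rewrite cardsU1 IH.
have [_ d] := inv E i; by rewrite d // Ho mem_head.
Qed.

Lemma adj_sym E : symmetric (adj E).
Proof. by move=> x y; rewrite /adj orbC. Qed.

Lemma full_run E : connected_graph E -> AA E m = setT.
Proof.
case/andP=> _ /forallP conn.
case: (count_run E m) => [Om|cA]; last first.
  by apply/eqP; rewrite eqEcard subsetT cardsT card_ord cA leqnn.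
apply/setP => y; rewrite inE.
have := forallP (conn ord0) y; case/connectP => p pth ->.
have : ord0 \in AA E m by move: (root_seen E m); rewrite /seen Om orbF.
elim: p (ord0 : V) pth => [//|z p IHp] x /= /andP [xz pz] xA.
apply: IHp pz _; move: (closedA xA xz); by rewrite /seen Om orbF.
Qed.

Lemma full_after E i : connected_graph E -> m <= i -> AA E i = setT /\ odfs_O E i = [::].
Proof.
move=> c le; have Ai : AA E i = setT.
  by apply/setP => y; rewrite inE; apply: (A_le le); rewrite full_run // inE.
split=> //; case Ho: (odfs_O E i) => [//|v t].
have [_ d] := inv E i; by move: (d v); rewrite Ho mem_head Ai inE => /(_ isT).
Qed.

Lemma explore_time E x : connected_graph E -> exists j, j < m /\ exists t, odfs_O E j = x :: t.
Proof. move=> c; apply: A_struct; by rewrite full_run // inE. Qed.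

Lemma run_conn E i x : seen E i x -> connect (adj E) ord0 x.
Proof.
elim: i x => [|i IH] x.
  by rewrite /seen A0 O0 inE !inE => /eqP ->; exact: connect0.
case Ho: (odfs_O E i) => [|v t].
  rewrite /seen; have [-> ->] := step_nil' Ho; exact: IH.
have [Oe Ae] := step_cons Ho; rewrite /seen Oe Ae !inE mem_cat.
have hv : connect (adj E) ord0 v by apply: IH; rewrite /seen Ho mem_head orbT.
case/orP => [/orP [/eqP -> //|xA]|/orP [xN|xt]].
- by apply: IH; rewrite /seen xA.
- move: xN; rewrite mem_filter => /andP [/andP [/andP [vx _] _] _].
  apply: connect_trans hv _; exact: connect1.
- by apply: IH; rewrite /seen Ho in_cons xt !orbT.
Qed.

Lemma run_connected E : simple_graph E -> AA E m = setT -> connected_graph E.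
Proof.
move=> s full; rewrite /connected_graph s /=; apply/forallP => u; apply/forallP => v.
have cs : connect_sym (adj E) by apply: sym_connect_sym; exact: adj_sym.
have hu : connect (adj E) ord0 u by apply: (@run_conn E m); rewrite /seen full inE.
have hv : connect (adj E) ord0 v by apply: (@run_conn E m); rewrite /seen full inE.
by apply: connect_trans hv; rewrite cs.
Qed.

Definition child E i w := (w \in odfs_O E i.+1) && (w \notin odfs_O E i).
Definition hd E i := head ord0 (odfs_O E i).
Definition norm (u w : V) : V * V := if u < w then (u, w) else (w, u).
Definition CE E := [set iw : 'I_m * V | child E (nat_of_ord iw.1) iw.2].
Definition D E := [set norm (hd E (nat_of_ord iw.1)) iw.2 | iw in CE E].

Lemma child_cons E i w : child E i w -> exists t, odfs_O E i = hd E i :: t.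
Proof.
rewrite /child /hd; case Ho: (odfs_O E i) => [|v t]; last by exists t.
by have [-> _] := step_nil' Ho; rewrite Ho.
Qed.

Lemma child_notseen E i w : child E i w -> ~~ seen E i w.
Proof.
move=> c; have [t Ho] := child_cons c; move: c; rewrite /child /seen => /andP [w1 w0].
rewrite negb_or w0 andbT; apply/negP => /(@AS E) wA.
by have [_ d] := inv E i.+1; move: (d _ w1); rewrite wA.
Qed.

Lemma child_adj E i w : child E i w -> adj E (hd E i) w.
Proof.
move=> c; have [t Ho] := child_cons c; move: c; rewrite /child.
have [-> _] := step_cons Ho; rewrite Ho mem_cat => /andP [/orP [wN|wt] wO].
  by move: wN; rewrite mem_filter => /andP [/andP [/andP [->]]].
by rewrite in_cons wt orbT in wO.
Qed.

Lemma childP E i v t w : odfs_O E i = v :: t -> adj E v w -> ~~ seen E i w -> child E i w.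
Proof.
move=> Ho vw; rewrite /seen negb_or => /andP [wA wO]; rewrite /child wO andbT.
have [-> _] := step_cons Ho; by rewrite mem_cat mem_filter vw wA -Ho wO mem_enum.
Qed.

Lemma child_ne E i w : child E i w -> hd E i != w.
Proof.
move=> c; have [t Ho] := child_cons c; move/child_notseen: c; rewrite /seen Ho.
by apply: contra => /eqP ->; rewrite mem_head orbT.
Qed.

Lemma child_once E i j w : child E i w -> child E j w -> i = j.
Proof.
suff h : forall i j, child E i w -> child E j w -> i <= j -> i = j.
  move=> ci cj; case: (leqP i j) => [|/ltnW] le; [exact: h | symmetry; exact: h].
move=> {}i {}j ci cj; rewrite leq_eqVlt => /orP [/eqP //|lt].
move: ci; rewrite /child => /andP [w1 _].
by have := F1 w1 lt; move/child_notseen: cj => /negbTE ->.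
Qed.

Lemma norm_eq (a b c d : V) : norm a b = norm c d -> (a = c /\ b = d) \/ (a = d /\ b = c).
Proof. by rewrite /norm; case: (a < b); case: (c < d); case=> -> ->; auto. Qed.

Lemma norm_sym (a b : V) : a != b -> norm a b = norm b a.
Proof.
move=> ne; rewrite /norm; case: (ltngtP a b) => //.
by move/val_inj => h; rewrite h eqxx in ne.
Qed.

Lemma norm_lt (a b : V) : a != b -> (norm a b).1 < (norm a b).2.
Proof.
move=> ne; rewrite /norm; case: (ltngtP a b) => //= h.
by move/val_inj : h => h; rewrite h eqxx in ne.
Qed.

Lemma norm_adj (F : {set V * V}) (a b : V) : norm a b \in F -> adj F a b.
Proof. by rewrite /norm /adj; case: (a < b) => ->; rewrite ?orbT. Qed.

Lemma adj_norm (F : {set V * V}) (a b : V) : simple_graph F -> adj F a b -> norm a b \in F.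
Proof.
move=> /forallP s; rewrite /adj /norm => /orP [] h; have := implyP (s _) h => /= lt.
  by rewrite lt.
by rewrite ltnNge ltnW.
Qed.

Lemma sub_adj (F1 F2 : {set V * V}) (a b : V) : F1 \subset F2 -> adj F1 a b -> adj F2 a b.
Proof. by move=> /subsetP s; rewrite /adj => /orP [] /s ->; rewrite ?orbT. Qed.

Lemma D_simple E : simple_graph (D E).
Proof.
apply/forallP => e; apply/implyP => /imsetP [[i w]]; rewrite inE /= => c ->.
by apply: norm_lt; exact: child_ne.
Qed.

Lemma D_sub E : simple_graph E -> D E \subset E.
Proof.
move=> s; apply/subsetP => e /imsetP [[i w]]; rewrite inE /= => c ->.
by apply: adj_norm => //; exact: child_adj.
Qed.

Lemma D_card E : connected_graph E -> #|D E| = n.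
Proof.
move=> conn.
have inj : {in CE E &, injective (fun iw : 'I_m * V => norm (hd E iw.1) iw.2)}.
  move=> [i w] [j w']; rewrite !inE /= => ci cj /norm_eq [[h1 h2]|[h1 h2]].
    subst w'; by rewrite (val_inj (child_once ci cj)).
  exfalso.
  have [t Hj] := child_cons cj; have [t' Hi] := child_cons ci.
  have wj : w \in odfs_O E j by rewrite Hj h2 mem_head.
  have w'i : w' \in odfs_O E i by rewrite Hi -h1 mem_head.
  have lij : i < j.
    rewrite ltnNge; apply/negP => le; have := F1 wj le.
    by move/child_notseen: ci => /negbTE ->.
  have lji : j < i.
    rewrite ltnNge; apply/negP => le; have := F1 w'i le.
    by move/child_notseen: cj => /negbTE ->.
  by have := ltn_trans lij lji; rewrite ltnn.
rewrite /D (card_in_imset inj).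
have inj2 : {in CE E &, injective (fun iw : 'I_m * V => iw.2)}.
  move=> [i w] [j w']; rewrite !inE /= => ci cj h; subst w'.
  by rewrite (val_inj (child_once ci cj)).
rewrite -(card_in_imset inj2).
have -> : [set iw.2 | iw in CE E] = [set~ ord0].
  apply/setP => w; rewrite !inE; apply/imsetP/idP.
    case=> [[i w']]; rewrite inE /= => c ->; apply/eqP => e.
    by move/child_notseen: c; rewrite e root_seen.
  move=> ne; have [j [jm [t Ho]]] := explore_time w conn.
  suff [i [ij c]] : exists i, i < j /\ child E i w.
    exists (Ordinal (ltn_trans ij jm), w) => //; by rewrite inE.
  have : w \in odfs_O E j by rewrite Ho mem_head.
  elim: {jm t Ho} j => [|j IH]; first by rewrite O0 inE (negbTE ne).
  case wj: (w \in odfs_O E j).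
    by move=> _; have [i [ij c]] := IH wj; exists i; split => //; exact: ltnW.
  by move=> w1; exists j; split=> //; rewrite /child w1 wj.
by rewrite cardsC1 card_ord.
Qed.

Lemma run_ext E1 E2 :
  (forall i v t w, odfs_O E1 i = v :: t -> ~~ seen E1 i w -> adj E1 v w = adj E2 v w) ->
  forall i, odfs_state E1 i = odfs_state E2 i.
Proof.
move=> h; elim=> [|i IH]; first by rewrite !state0.
rewrite /odfs_state !iterS -/(odfs_state E1 i) -/(odfs_state E2 i) -IH.
have := h i; rewrite /seen /odfs_O /AA.
case: (odfs_state E1 i) => [[|v t] A] //= hh.
congr pair; congr cat; apply: eq_filter => w.
case wA: (w \in A); rewrite ?andbF //. case wO: (w \in v :: t); rewrite ?andbF //.
by rewrite (hh v t w) // wA wO.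
Qed.

Lemma D_run E : connected_graph E -> forall i, odfs_state E i = odfs_state (D E) i.
Proof.
move=> conn; have s : simple_graph E by case/andP: conn.
apply: run_ext => i v t w Ho ns.
case: (ltnP i m) => im; last first.
  by have [Ai _] := full_after conn im; move: ns; rewrite /seen Ai inE.
apply/idP/idP => h.
  apply: norm_adj; apply/imsetP; exists (Ordinal im, w); rewrite ?inE /=.
    exact: childP Ho h ns.
  by rewrite /hd Ho.
exact: sub_adj (D_sub s) h.
Qed.

Lemma seen_ext E1 E2 i x : (forall i, odfs_state E1 i = odfs_state E2 i) -> seen E1 i x = seen E2 i x.
Proof. by move=> h; rewrite /seen /AA /odfs_O h. Qed.

Lemma D_tree E : connected_graph E -> is_tree (D E).
Proof.
move=> conn; rewrite /is_tree D_card // eqxx andbT.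
apply: run_connected; first exact: D_simple.
apply/setP => x; rewrite inE; have := full_run conn.
rewrite /AA -(D_run conn) => ->; by rewrite inE.
Qed.

Lemma D_ext E1 E2 : (forall i, odfs_state E1 i = odfs_state E2 i) -> D E1 = D E2.
Proof.
move=> h; have e : odfs_state E1 = odfs_state E2 by apply: functional_extensionality.
by rewrite /D /CE /hd /child /odfs_O e.
Qed.

Lemma tree_D T : is_tree T -> D T = T.
Proof.
case/andP => conn /eqP c; have s : simple_graph T by case/andP: conn.
apply/eqP; rewrite eqEcard D_sub // c D_card //= leqnn.
Qed.

Lemma uniq_run T G : is_tree T -> T \subset G -> G :\: T \subset permitted T ->
  forall i, odfs_state T i = odfs_state G i.
Proof.
move=> tr sub perm; apply: run_ext => i v t w Ho ns.
apply/idP/idP => h; first exact: sub_adj sub h.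
apply/negPn/negP => nT; move: h; rewrite /adj => /orP [] h.
- have : (v, w) \in G :\: T by rewrite inE h andbT; apply/negP => vwT; by move: nT; rewrite /adj vwT.
  move/(subsetP perm); rewrite inE => /and3P [_ _ /existsP [j /andP [/= vj wj]]].
  have := F1 wj (F2 Ho vj); by rewrite (negbTE ns).
- have : (w, v) \in G :\: T by rewrite inE h andbT; apply/negP => vwT; by move: nT; rewrite /adj vwT orbT.
  move/(subsetP perm); rewrite inE => /and3P [_ _ /existsP [j /andP [/= wj vj]]].
  have := F1 wj (F2 Ho vj); by rewrite (negbTE ns).
Qed.

Lemma uniq_tree T G : is_tree T -> T \subset G -> G :\: T \subset permitted T -> T = D G.
Proof. move=> tr sub perm; rewrite -(tree_D tr); apply: D_ext; exact: uniq_run. Qed.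

Lemma exist_tree G : connected_graph G -> D G \subset G /\ G :\: D G \subset permitted (D G).
Proof.
move=> conn; have s : simple_graph G by case/andP: conn.
split; first exact: D_sub.
apply/subsetP => [[u w]]; rewrite !inE => /andP [nD uwG].
have lt : u < w by have := forallP s (u, w); rewrite uwG.
rewrite lt nD /=.
have ne : u != w by apply/eqP => e; rewrite e ltnn in lt.
have [iu [ium [tu Hu]]] := explore_time u conn.
have [iw [iwm [tw Hw]]] := explore_time w conn.
suff key : forall a b ia ta ib tb, adj G a b -> norm a b \notin D G ->
    odfs_O G ia = a :: ta -> odfs_O G ib = b :: tb -> ia < ib -> ia < m ->
    a \in odfs_O (D G) ia /\ b \in odfs_O (D G) ia.
  have nuw : norm u w = (u, w) by rewrite /norm lt.
  have auw : adj G u w by rewrite /adj uwG.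
  case: (ltngtP iu iw) => c.
  - have nn : norm u w \notin D G by rewrite nuw.
    have [h1 h2] := key _ _ _ _ _ _ auw nn Hu Hw c ium.
    apply/existsP; exists (Ordinal (leqW ium)); by rewrite h1 h2.
  - have nn : norm w u \notin D G by rewrite -norm_sym // nuw.
    have awu : adj G w u by rewrite adj_sym.
    have [h1 h2] := key _ _ _ _ _ _ awu nn Hw Hu c iwm.
    apply/existsP; exists (Ordinal (leqW iwm)); by rewrite h1 h2.
  - subst iw; rewrite Hu in Hw; case: Hw => e; by rewrite e eqxx in ne.
move=> a b ia ta ib tb ab nab Ha Hb lab iam.
rewrite /odfs_O -(D_run conn) -/(odfs_O G ia) Ha mem_head; split=> //.
have bA : b \notin AA G ia.
  apply/negP => /A_struct [j [ji [t' Hj]]].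
  have := explored_once Hb Hj.
  move=> e; subst j; by have := ltn_trans ji lab; rewrite ltnn.
case bO: (b \in a :: ta) => //.
exfalso; move/negP: nab; apply; apply/imsetP; exists (Ordinal iam, b); rewrite ?inE /=.
  apply: (childP Ha ab); by rewrite /seen negb_or bA Ha bO.
by rewrite /hd Ha.
Qed.

Lemma notA_later E ia ib a ta b tb : odfs_O E ia = a :: ta -> odfs_O E ib = b :: tb ->
  ia < ib -> b \notin AA E ia.
Proof.
move=> Ha Hb lab; apply/negP => /A_struct [j [ji [t' Hj]]].
have e := explored_once Hb Hj; subst j; by have := ltn_trans ji lab; rewrite ltnn.
Qed.

Definition PP E := [set iw : 'I_m * V | iw.2 \in behead (odfs_O E (nat_of_ord iw.1))].

Lemma PP_card E : #|PP E| = area E.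
Proof.
rewrite -sum1_card /PP.
rewrite (eq_bigl (fun iw : 'I_m * V => predT iw.1 && (iw.2 \in behead (odfs_O E iw.1)))); last first.
  by move=> iw; rewrite inE.
rewrite -(pair_big_dep predT (fun (i : 'I_m) (w : V) => w \in behead (odfs_O E i)) (fun _ _ => 1%N)) /=.
rewrite /area /dfwalk.
rewrite (eq_bigr (fun i : 'I_m => (size (odfs_O E i)).-1)); last first.
  move=> i _; rewrite sum1_card -size_behead; apply/card_uniqP.
  have [u _] := inv E i; by case: (odfs_O E i) u => //= x s /andP [].
rewrite -(big_mkord predT (fun i => (size (odfs_O E i)).-1)).
change (\sum_(0 <= i < m) (size (odfs_O E i)).-1 = \sum_(1 <= i < m) (size (odfs_O E i)).-1)%N.
by rewrite big_ltn // O0.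
Qed.

Lemma area_perm T : is_tree T -> #|permitted T| = area T.
Proof.
move=> tr; have conn : connected_graph T by case/andP: tr.
pose f := fun iw : 'I_m * V => norm (hd T iw.1) iw.2.
have PPc : forall i w, w \in behead (odfs_O T i) -> exists t, odfs_O T i = hd T i :: t /\ w \in t.
  rewrite /hd => i w; case: (odfs_O T i) => //= x t wt; by exists t.
have uq : forall i x t, odfs_O T i = x :: t -> x \notin t.
  move=> i x t Ho; have [u _] := inv T i; rewrite Ho /= in u; by case/andP: u.
have inj : {in PP T &, injective f}.
  move=> [i w] [j w']; rewrite !inE /= => /PPc [t [Hi wt]] /PPc [t' [Hj wt']].
  rewrite /f /= => /norm_eq [[h1 h2]|[h1 h2]].
    subst w'; rewrite h1 in Hi; by rewrite (val_inj (explored_once Hi Hj)).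
  exfalso.
  have le1 : j <= i by apply: (F2 Hi); rewrite Hj in_cons h1 wt' orbT.
  have le2 : i <= j by apply: (F2 Hj); rewrite Hi in_cons -h2 wt orbT.
  have e : i = j :> nat by apply: anti_leq; rewrite le1 le2.
  move/val_inj: e => e; subst j.
  by move: (uq _ _ _ Hi); rewrite -h2 wt.
rewrite -PP_card -(card_in_imset inj).
suff -> : permitted T = [set f x | x in PP T] by [].
apply/eqP; rewrite eqEsubset; apply/andP; split; apply/subsetP => -[u w].
  rewrite inE /= => /and3P [lt nT /existsP [j /andP [uj wj]]].
  have [iu [ium [tu Hu]]] := explore_time u conn.
  have [iw [iwm [tw Hw]]] := explore_time w conn.
  have ne : u != w by apply/eqP => e; rewrite e ltnn in lt.
  have nuw : norm u w = (u, w) by rewrite /norm lt.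
  suff key : forall a b ia ta ib tb, a \in odfs_O T j -> b \in odfs_O T j -> a != b ->
      odfs_O T ia = a :: ta -> odfs_O T ib = b :: tb -> ia < ib -> b \in ta.
    apply/imsetP; case: (ltngtP iu iw) => c.
    - exists (Ordinal ium, w); first by rewrite inE /= Hu (key _ _ _ _ _ _ uj wj ne Hu Hw c).
      by rewrite /f /hd /= Hu nuw.
    - exists (Ordinal iwm, u); first by rewrite inE /= Hw (key _ _ _ _ _ _ wj uj _ Hw Hu c) // eq_sym.
      by rewrite /f /hd /= Hw -norm_sym ?nuw // eq_sym.
    - subst iw; rewrite Hu in Hw; case: Hw => e; by rewrite e eqxx in ne.
  move=> a b ia ta ib tb aj bj ab Ha Hb lab.
  have := F1 bj (F2 Ha aj); rewrite /seen (negbTE (notA_later Ha Hb lab)) Ha in_cons /=.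
  by case/orP => // /eqP e; rewrite e eqxx in ab.
move=> /imsetP [[i x]]; rewrite inE /= => /PPc [t [Hi wt]] ->; rewrite /f /=; clear u w; move: x t Hi wt => w t Hi wt.
have ne : hd T i != w by apply/eqP => e; move: (uq _ _ _ Hi); rewrite e wt.
have hi : hd T i \in odfs_O T i by rewrite Hi mem_head.
have wi : w \in odfs_O T i by rewrite Hi in_cons wt orbT.
have im : i < m.+1 by apply: leqW.
rewrite inE norm_lt //=; apply/andP; split.
  apply/negP => hT; have : norm (hd T i) w \in D T by rewrite tree_D.
  case/imsetP => [[k c]]; rewrite inE /= => ck.
  have [t' Hk] := child_cons ck.
  move/norm_eq => [[h1 h2]|[h1 h2]].
    rewrite h1 in Hi; have e := val_inj (explored_once Hi Hk); subst k.
    by move: ck; rewrite /child -h2 wi andbF.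
  have ki : k < i.
    rewrite ltnNge; apply/negP => le; have := F1 hi le.
    by rewrite h1; move/child_notseen: ck => /negbTE ->.
  have ik : i <= k by apply: (F2 Hk); rewrite -h2.
  by have := leq_trans ki ik; rewrite ltnn.
apply/existsP; exists (Ordinal im); rewrite /norm.
by case: (hd T i < w); rewrite /= ?hi ?wi.
Qed.
End Run.

Local Open Scope ring_scope.

Lemma alg_id (R : realFieldType) (x P Z : R) (a k : nat) : x != 0 -> (k <= a)%N ->
  x ^- a / Z * P * x ^+ (a - k) = P / x ^+ k / Z.
Proof.
move=> x0 le; rewrite -{1}(subnK le) exprD invfM.
have y0 : x ^+ (a - k) != 0 by rewrite expf_neq0.
rewrite -!mulrA (mulrC P) !mulrA -(mulrAC _ (x ^+ (a - k))) -(mulrAC _ (x ^+ (a - k))) mulVf // mul1r.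
by rewrite mulrC !mulrA.
Qed.

Lemma law_val (n : nat) (R : realFieldType) (p : R) (k : nat) (G : {set 'I_n.+1 * 'I_n.+1}) :
  p < 1 -> surplus_is G k ->
  graph_law p G = if connected_graph G && (#|G| == (n.+1 + k).-1)%N
                  then p ^+ k / (1 - p) ^+ k / tree_Z n.+1 p else 0.
Proof.
move=> p1 sk; rewrite /graph_law.
case P: (connected_graph G && _).
  case/andP: P => conn /eqP sz.
  rewrite (bigD1 (D G)) /=; last exact: D_tree.
  rewrite big1 ?addr0; last first.
    move=> T /andP [tr ne]; case: ifP => // /andP [sub perm].
    by rewrite (uniq_tree tr sub perm) eqxx in ne.
  have [sub perm] := exist_tree conn; rewrite sub perm /=.
  have cD : #|G :\: D G| = k.
    rewrite cardsD (setIidPr sub) D_card // sz addSn /= addKn //.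
  rewrite cD area_perm ?D_tree //.
  have le : (k <= area (D G))%N.
    by rewrite -cD -area_perm ?D_tree // subset_leq_card.
  rewrite /tree_law /tree_weight alg_id //.
  by rewrite subr_eq0 eq_sym; apply: contraTneq p1 => ->; rewrite ltxx.
rewrite big1 // => T tr; case: ifP => // /andP [sub perm]; exfalso.
move: P; suff -> : connected_graph G && (#|G| == (n.+1 + k).-1)%N by [].
apply/andP; split; last first.
  by move: sk; rewrite /surplus_is addSn /= addnC.
rewrite /connected_graph; apply/andP; split.
  apply/forallP => e; apply/implyP => eG.
  case eT: (e \in T).
    by case/andP: tr => /andP [/forallP s _] _; exact: (implyP (s e) eT).
  have : e \in G :\: T by rewrite inE eT eG.
  by move/(subsetP perm); rewrite inE => /and3P [].
case/andP: tr => /andP [_ /forallP c] _.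
apply/forallP => u; apply/forallP => v.
have := forallP (c u) v; apply: connect_sub => x y h.
by apply: connect1; exact: sub_adj sub h.
Qed.

Theorem corollary4 (R : realFieldType) (p : R) (m k : nat) :
  0 < p -> p < 1 -> (0 < m)%N ->
  0 < prob_surplus m p k ->
  forall G : {set 'I_m * 'I_m},
    cond_law p k G =
      (if connected_graph G && (#|G| == (m + k).-1)%N
       then (n_conn m k)%:R^-1 else 0).
Proof.
case: m => [//|n] p0 p1 _ hpos G.
set c := p ^+ k / (1 - p) ^+ k / tree_Z n.+1 p.
have ps : prob_surplus n.+1 p k = c *+ n_conn n.+1 k.
  rewrite /prob_surplus (eq_bigr _ (fun G sk => law_val p1 sk)) -big_mkcondr /=.
  rewrite (eq_bigl (fun G => G \in [set G : {set 'I_n.+1 * 'I_n.+1} | connected_graph G && (#|G| == (n.+1 + k).-1)%N])).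
    by rewrite sumr_const.
  move=> H; rewrite inE; case: (connected_graph H && _) /andP => [[_ /eqP sz]|]; last by rewrite andbF.
  by rewrite /surplus_is sz /= addnC eqxx.
have c0 : c != 0 by apply: contraTneq hpos => e; rewrite ps e mul0rn ltxx.
rewrite /cond_law ps.
case sk: (surplus_is G k).
  rewrite (law_val p1 sk); case: ifP => _; last by rewrite mul0r.
  by rewrite -mulr_natr invfM mulVKf.
case: ifP; last by rewrite mul0r.
by case/andP => _ /eqP sz; move: sk; rewrite /surplus_is sz /= addnC eqxx.
Qed.
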